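(* Let $p=\sum_{i=0}^n c_ix^i$ be a polynomial with coefficients $c_i$ in the signed tropical hyperfield $\mathbb{T}\mathbb{R}$, and let $a=(+1,r)\in\mathbb{T}\mathbb{R}$ (with $r\in\mathbb{R}$) be a root of $p$. Then \[ \operatorname{mult}_a(p)=\Delta\big(\operatorname{In}^{(r)}(p)\big), \] where $\operatorname{In}^{(r)}(p)=\sum\{\operatorname{sign}(c_i)x^i : |c_i|+ir=C\}\in\mathbf{S}[x]$ with $C=\min_i(|c_i|+ir)$, and $\Delta$ denotes the number of sign changes in the sequence of coefficients, ignoring zeros.
   Context: The signed tropical hyperfield $\mathbb{T}\mathbb{R}$ has underlying set $(\{\pm1\}\times\mathbb{R})\cup\{\infty\}$. Multiplication: $(s,r)\cdot(s',r')=(ss',r+r')$, $\infty\cdot x=\infty$; the unit is $(+1,0)$ and the zero is $\infty$. For $x=(s,r)$ write $\operatorname{sign}(x)=s$, $|x|=r$, and $\operatorname{sign}(\infty)=0$, $|\infty|=\infty$; also $-(s,r)=(-s,r)$. Hyperaddition: $x\boxplus\infty=\{x\}$, and $(s,r)\boxplus(s',r')$ equals $\{(s,r)\}$ if $r<r'$, $\{(s',r')\}$ if $r'<r$, $\{(s,r)\}$ if $r=r'$ and $s=s'$, and $\{(\pm1,t):t\ge r\}\cup\{\infty\}$ if $r=r'$ and $s=-s'$; iterated sums are defined by $a_1\boxplus\cdots\boxplus a_n=\bigcup_{b\in a_1\boxplus\cdots\boxplus a_{n-1}} b\boxplus a_n$. The element $a$ is positive if its sign is $+1$. The sign hyperfield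 $\mathbf{S}=\{0,1,-1\}$ has the usual multiplication, $0\boxplus x=\{x\}$, $1\boxplus1=\{1\}$, $-1\boxplus-1=\{-1\}$, $1\boxplus-1=\{0,1,-1\}$. For a polynomial $p=\sum_{i=0}^n c_ix^i$ over a hyperfield $H$ and $a\in H$: $a$ is a root of $p$ (written $0\in p(a)$) if $0\in\boxplus_{i=0}^n c_ia^i$. Write $p\in(x-a)q$ for $q=\sum_{i=0}^{n-1}d_ix^i$ if $c_0=-ad_0$, $c_i\in(-ad_i)\boxplus d_{i-1}$ for $1\le i\le n-1$, and $c_n=d_{n-1}$. The multiplicity is defined recursively: $\operatorname{mult}_a(p)=0$ if $0\notin p(a)$, and $\operatorname{mult}_a(p)=1+\max\{\operatorname{mult}_a(q):p\in(x-a)q\}$ if $0\in p(a)$. *)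

(* Defs.v *)
From Stdlib Require Import Reals List ZArith ClassicalEpsilon.
Import ListNotations.
Open Scope R_scope.

(* Fin s r = (s, r) with s = true meaning sign +1, s = false meaning -1;
   Inf = the element oo (the zero of TR). *)
Inductive TR : Type :=
| Inf : TR
| Fin : bool -> R -> TR.

Definition tone : TR := Fin true 0.

Definition tmul (x y : TR) : TR :=
  match x, y with
  | Fin s r, Fin s' r' => Fin (Bool.eqb s s') (r + r')
  | _, _ => Inf
  end.

Definition topp (x : TR) : TR :=
  match x with Inf => Inf | Fin s r => Fin (negb s) r end.

Fixpoint tpow (x : TR) (n : nat) : TR :=
  match n with O => tone | S n => tmul (tpow x n) x end.

Definition hadd (x y : TR) : TR -> Prop :=
  match x, y with
  | Inf, _ => fun z => z = y
  | _, Inf => fun z => z = x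
  | Fin s r, Fin s' r' =>
      fun z =>
        if Rlt_dec r r' then z = x
        else if Rlt_dec r' r then z = y
        else if Bool.eqb s s' then z = x
        else z = Inf \/ exists (b : bool) (t : R), r <= t /\ z = Fin b t
  end.

Definition hsum (l : list TR) : TR -> Prop :=
  match l with
  | [] => fun z => z = Inf
  | a :: l' =>
      fold_left (fun (S : TR -> Prop) (y : TR) => fun z => exists b, S b /\ hadd b y z)
        l' (fun z => z = a)
  end.

(* ---------- Polynomials over TR ----------
   A polynomial p = sum_{i=0}^n c_i x^i is the list [c_0; ...; c_n]. *)
Definition coef (p : list TR) (i : nat) : TR := nth i p Inf.

Definition peval (p : list TR) (a : TR) : TR -> Prop :=
  hsum (map (fun i => tmul (coef p i) (tpow a i)) (seq 0 (length p))).

Definition is_root (a : TR) (p : list TR) : Prop := peval p a Inf.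

(* p ∈ (x - a) q, where p has degree n >= 1 (length n+1) and q has length n *)
Definition pdiv_rel (a : TR) (p q : list TR) : Prop :=
  let n := length q in
  length p = S n /\ (1 <= n)%nat /\
  coef p 0 = topp (tmul a (coef q 0)) /\
  (forall i, (1 <= i <= n - 1)%nat ->
      hadd (topp (tmul a (coef q i))) (coef q (i - 1)) (coef p i)) /\
  coef p n = coef q (n - 1).

(* maximum of a set of naturals (chosen classically; the set is nonempty and
   bounded in all uses covered by the theorem) *)
Definition natmax (P : nat -> Prop) : nat :=
  epsilon (inhabits 0%nat) (fun m => P m /\ forall m', P m' -> (m' <= m)%nat).

(* mult_a(p) = 0 if a is not a root, else 1 + max { mult_a(q) : p ∈ (x-a) q };
   the recursion is on the length (q is shorter than p), implemented with fuel. *)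
Fixpoint mult_fuel (k : nat) (a : TR) (p : list TR) : nat :=
  match k with
  | O => O
  | S k =>
      if excluded_middle_informative (is_root a p)
      then S (natmax (fun m => exists q, pdiv_rel a p q /\ m = mult_fuel k a q))
      else O
  end.

Definition mult (a : TR) (p : list TR) : nat := mult_fuel (length p) a p.

Definition tsign (x : TR) : Z :=
  match x with Inf => 0%Z | Fin true _ => 1%Z | Fin false _ => (-1)%Z end.

(* coefficient i of In^{(r)}(p) in the sign hyperfield S = {0,1,-1}:
   sign(c_i) if |c_i| + i r = C := min_j (|c_j| + j r), else 0 *)
Definition initial_coef (p : list TR) (r : R) (i : nat) : Z :=
  match coef p i with
  | Inf => 0%Z
  | Fin s v =>
      if excluded_middle_informative
           (forall j (s' : bool) w, (j < length p)%nat -> coef p j = Fin s' w ->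
              v + INR i * r <= w + INR j * r)
      then tsign (Fin s v) else 0%Z
  end.

Definition initial_form (p : list TR) (r : R) : list Z :=
  map (initial_coef p r) (seq 0 (length p)).

Fixpoint adj_changes (l : list Z) : nat :=
  match l with
  | x :: ((y :: _) as l') =>
      ((if Z.ltb (x * y) 0 then 1 else 0) + adj_changes l')%nat
  | _ => O
  end.

Definition sign_changes (l : list Z) : nat :=
  adj_changes (filter (fun z => negb (Z.eqb z 0)) l).

(* Main.v *)
Require Import Defs.
From Stdlib Require Import Reals List ZArith Lra Lia Classical ClassicalEpsilon.
Import ListNotations.
Open Scope R_scope.

Module MP1.
Open Scope R_scope.

Lemma hadd_FF s v s' w z : hadd (Fin s v) (Fin s' w) z <->
  (v < w /\ z = Fin s v) \/ (w < v /\ z = Fin s' w) \/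
  (v = w /\ s = s' /\ z = Fin s v) \/
  (v = w /\ s <> s' /\ (z = Inf \/ exists b t, v <= t /\ z = Fin b t)).
Proof.
  simpl. destruct (Rlt_dec v w) as [h1|h1]; [| destruct (Rlt_dec w v) as [h2|h2]].
  - split; [intro H; left; auto |].
    intros [[_ H]|[[H _]|[[H _]|[H _]]]]; auto; lra.
  - split; [intro H; right; left; auto |].
    intros [[H _]|[[_ H]|[[H _]|[H _]]]]; auto; lra.
  - assert (v = w) by lra. subst w.
    destruct (Bool.eqb s s') eqn:E.
    + apply Bool.eqb_prop in E. subst s'. split.
      * intro H; right; right; left; auto.
      * intros [[H _]|[[H _]|[[_ [_ H]]|[_ [H _]]]]]; auto; try lra; congruence.
    + assert (s <> s') by (intro; subst; rewrite Bool.eqb_reflx in E; discriminate).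
      split.
      * intro H0; right; right; right; auto.
      * intros [[H0 _]|[[H0 _]|[[_ [H0 _]]|[_ [_ H0]]]]]; auto; try lra; congruence.
Qed.

Lemma hadd_Il y z : hadd Inf y z <-> z = y.
Proof. simpl. tauto. Qed.
Lemma hadd_Ir x z : hadd x Inf z <-> z = x.
Proof. destruct x; simpl; tauto. Qed.

Lemma bool_neq s s' : s <> s' -> s' = negb s.
Proof. destruct s, s'; simpl; congruence. Qed.

Ltac hsimpl := repeat match goal with
  | H : hadd (Fin _ _) (Fin _ _) _ |- _ => apply (proj1 (hadd_FF _ _ _ _ _)) in H
  | H : hadd Inf _ _ |- _ => apply (proj1 (hadd_Il _ _)) in H
  | H : hadd _ Inf _ |- _ => apply (proj1 (hadd_Ir _ _)) in H
  | |- hadd (Fin _ _) (Fin _ _) _ => apply (proj2 (hadd_FF _ _ _ _ _))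
  | |- hadd Inf _ _ => apply (proj2 (hadd_Il _ _))
  | |- hadd _ Inf _ => apply (proj2 (hadd_Ir _ _))
  end.

Lemma topp_F s v : topp (Fin s v) = Fin (negb s) v.
Proof. reflexivity. Qed.
Lemma topp_I : topp Inf = Inf.
Proof. reflexivity. Qed.

Lemma hadd_comm x y z : hadd x y z -> hadd y x z.
Proof.
  destruct x as [|s v], y as [|s' w]; simpl topp; intro H; hsimpl; auto.
  destruct H as [[h1 h2]|[[h1 h2]|[[h1 [h2 h3]]|[h1 [h2 h3]]]]]; subst.
  - right; left; auto.
  - left; auto.
  - right; right; left; auto.
  - right; right; right; split; auto.
Qed.

Lemma hadd_opp x y z : hadd x y z -> hadd (topp x) (topp y) (topp z).
Proof.
  destruct x as [|s v], y as [|s' w]; simpl topp; intro H; hsimpl; subst; auto.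
  destruct H as [[h1 h2]|[[h1 h2]|[[h1 [h2 h3]]|[h1 [h2 h3]]]]]; subst; simpl.
  - left; auto.
  - right; left; auto.
  - right; right; left; auto.
  - right; right; right; split; auto. split. destruct s, s'; simpl; congruence.
    destruct h3 as [->|[b [t [h4 ->]]]]; [left; auto| right; exists (negb b), t; auto].
Qed.

Lemma hadd_cancel y : hadd (topp y) y Inf.
Proof. destruct y as [|s w]; rewrite ?topp_F, ?topp_I; hsimpl; auto. right; right; right.
  repeat split; auto. destruct s; simpl; congruence. Qed.

Lemma hadd_rev x y z : hadd x y z -> hadd (topp z) y (topp x).
Proof.
  destruct x as [|s v], y as [|s' w]; rewrite ?topp_F, ?topp_I; intro H; hsimpl; subst; rewrite ?topp_F, ?topp_I.
  - hsimpl; auto.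
  - exact (hadd_cancel (Fin s' w)).
  - hsimpl; auto.
  - destruct H as [[h1 h2]|[[h1 h2]|[[h1 [h2 h3]]|[h1 [h2 h3]]]]]; try subst z; rewrite ?topp_F, ?topp_I; hsimpl.
    + left; auto.
    + right; right; right. repeat split; auto. destruct s'; simpl; congruence.
      right. exists (negb s), v. split; [lra|auto].
    + subst s'. right; right; right. repeat split; auto. destruct s; simpl; congruence.
      right. exists (negb s), v. split; [lra|auto].
    + subst w. destruct h3 as [->|[b [t [h4 ->]]]]; rewrite ?topp_F, ?topp_I; hsimpl.
      * apply bool_neq in h2. subst. auto.
      * apply bool_neq in h2. subst s'.
        destruct (Rlt_dec v t).
        -- right; left; auto.
        -- assert (t = v) by lra. subst t.
           destruct (Bool.bool_dec (negb b) (negb s)) as [e|e].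
           ++ right; right; left; rewrite e; auto.
           ++ right; right; right; repeat split; auto. right. exists (negb s), v. split; [lra|auto].
Qed.

Definition sh (c : R) (x : TR) : TR := match x with Inf => Inf | Fin s v => Fin s (v + c) end.

Lemma tmul_true x c : tmul x (Fin true c) = sh c x.
Proof. destruct x as [|s v]; simpl; auto. destruct s; reflexivity. Qed.

Lemma sh_sh c d x : sh c (sh d x) = sh (d + c) x.
Proof. destruct x; simpl; auto. f_equal; ring. Qed.
Lemma sh_0 x : sh 0 x = x.
Proof. destruct x; simpl; auto. f_equal; ring. Qed.
Lemma sh_ext c d x : c = d -> sh c x = sh d x.
Proof. intros ->; auto. Qed.
Lemma sh_inj c x y : sh c x = sh c y -> x = y.
Proof. intro H. rewrite <- (sh_0 x), <- (sh_0 y). replace 0 with (c + - c) by ring.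
  rewrite <- !sh_sh, H. auto. Qed.
Lemma sh_topp c x : sh c (topp x) = topp (sh c x).
Proof. destruct x; auto. Qed.

Lemma hadd_sh c x y z : hadd x y z -> hadd (sh c x) (sh c y) (sh c z).
Proof.
  destruct x as [|s v], y as [|s' w]; simpl sh; intro H; hsimpl; subst; auto.
  destruct H as [[h1 h2]|[[h1 h2]|[[h1 [h2 h3]]|[h1 [h2 h3]]]]]; subst; simpl.
  - left; split; auto; lra.
  - right; left; split; auto; lra.
  - right; right; left; auto.
  - right; right; right; repeat split; auto.
    destruct h3 as [->|[b [t [h4 ->]]]]; [left; auto| right; exists b, (t + c); split; simpl; auto; lra].
Qed.

Lemma hadd_sh_iff c x y z : hadd x y z <-> hadd (sh c x) (sh c y) (sh c z).
Proof.
  split; [apply hadd_sh|]. intro H. apply (hadd_sh (-c)) in H.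
  rewrite !sh_sh in H. replace (c + - c) with 0 in H by ring. rewrite !sh_0 in H. auto.
Qed.

Definition hpick (x y : TR) : TR :=
  match x, y with
  | Inf, _ => y
  | _, Inf => x
  | Fin s v, Fin s' w => if Rlt_dec w v then y else x
  end.

Lemma hpick_in x y : hadd x y (hpick x y).
Proof.
  destruct x as [|s v], y as [|s' w]; simpl hpick; hsimpl; auto.
  destruct (Rlt_dec w v).
  - right; left; auto.
  - destruct (Rlt_dec v w). left; auto.
    assert (v = w) by lra. subst.
    destruct (Bool.bool_dec s s'). right; right; left; auto.
    right; right; right; repeat split; auto. right; exists s, w; split; auto; lra.
Qed.

Lemma hpick_Ir x : hpick x Inf = x.
Proof. destruct x; auto. Qed.

Definition geC (C : R) (x : TR) : Prop := match x with Inf => True | Fin _ v => C <= v end.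

Lemma hadd_geC C x y z : geC C x -> geC C y -> hadd x y z -> geC C z.
Proof.
  destruct x as [|s v], y as [|s' w]; simpl geC; intros h1 h2 H; hsimpl; subst; simpl; auto.
  destruct H as [[h3 h4]|[[h3 h4]|[[h3 [h4 h5]]|[h3 [h4 h5]]]]]; subst; simpl; auto.
  destruct h5 as [->|[b [t [h6 ->]]]]; simpl; auto; lra.
Qed.

Lemma hadd_geC_l C x y z : geC C y -> geC C z -> hadd x y z -> geC C x.
Proof.
  destruct x as [|s v], y as [|s' w]; simpl geC; intros h1 h2 H; hsimpl; subst; simpl; auto.
  destruct H as [[h3 h4]|[[h3 h4]|[[h3 [h4 h5]]|[h3 [h4 h5]]]]]; subst; simpl in *; auto; lra.
Qed.

Lemma geC_topp C x : geC C (topp x) <-> geC C x.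
Proof. destruct x; simpl; tauto. Qed.

Lemma hpick_geC C x y : geC C x -> geC C y -> geC C (hpick x y).
Proof. destruct x, y; simpl; auto. destruct Rlt_dec; auto. Qed.

Lemma hadd_mid b v d : geC v d -> hadd (topp d) (Fin b v) (Fin b v).
Proof.
  destruct d as [|s w]; simpl geC; intro h; rewrite ?topp_F, ?topp_I; hsimpl; auto.
  destruct (Rlt_dec v w). right; left; auto.
  assert (w = v) by lra. subst.
  destruct (Bool.bool_dec (negb s) b) as [e|e].
  - right; right; left; rewrite e; auto.
  - right; right; right; repeat split; auto. right; exists b, v; split; auto; lra.
Qed.

End MP1.
Import MP1.

Module MP2.
Open Scope Z_scope.

Definition upd (l x : Z) : Z := if Z.eqb x 0 then l else x.
Definition chg (l x : Z) : nat := if Z.ltb (l * x) 0 then 1%nat else 0%nat.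
Fixpoint cnt (e : list Z) (l : Z) : nat :=
  match e with [] => 0%nat | x :: e' => (chg l x + cnt e' (upd l x))%nat end.
Fixpoint lastnz (e : list Z) (l : Z) : Z :=
  match e with [] => l | x :: e' => lastnz e' (upd l x) end.
Definition inr (z : Z) : bool := (z =? -1) || (z =? 0) || (z =? 1).

Lemma inr_cases z : inr z = true -> z = -1 \/ z = 0 \/ z = 1.
Proof. unfold inr. intro H. repeat rewrite Bool.orb_true_iff in H. lia. Qed.

Ltac zc H := let z := match type of H with inr ?z = true => z end in
  destruct (inr_cases z H) as [-> | [-> | ->]]; clear H.
Ltac zcases := repeat match goal with H : inr _ = true |- _ => zc H end.

Lemma adj_cons2 x y l : adj_changes (x :: y :: l) = ((if Z.ltb (x * y) 0 then 1 else 0) + adj_changes (y :: l))%nat.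
Proof. reflexivity. Qed.

Lemma adj_filter l x : x <> 0 ->
  adj_changes (x :: filter (fun z => negb (Z.eqb z 0)) l) = cnt l x.
Proof.
  revert x; induction l as [|y l IH]; intros x hx; [reflexivity|].
  cbn [filter]. change (cnt (y::l) x) with (chg x y + cnt l (upd x y))%nat.
  unfold upd, chg. destruct (Z.eqb_spec y 0) as [->|hy]; cbn [negb].
  - rewrite Z.mul_0_r. simpl Z.ltb. simpl plus. apply IH; auto.
  - rewrite adj_cons2, IH by auto. reflexivity.
Qed.

Lemma sc_cnt l : sign_changes l = cnt l 0.
Proof.
  unfold sign_changes. induction l as [|y l IH]; [reflexivity|].
  cbn [filter]. change (cnt (y::l) 0) with (chg 0 y + cnt l (upd 0 y))%nat.
  unfold upd, chg. destruct (Z.eqb_spec y 0) as [->|hy]; cbn [negb].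
  - simpl. apply IH.
  - rewrite adj_filter by auto. reflexivity.
Qed.

Lemma cnt_app l1 l2 m : cnt (l1 ++ l2) m = (cnt l1 m + cnt l2 (lastnz l1 m))%nat.
Proof. revert m; induction l1; intro m; simpl; auto. rewrite IHl1. lia. Qed.

Lemma lastnz_app l1 l2 m : lastnz (l1 ++ l2) m = lastnz l2 (lastnz l1 m).
Proof. revert m; induction l1; intro m; simpl; auto. Qed.

Lemma hd_lemma (L : list Z) m : (chg m (hd 0%Z L) + cnt L (upd m (hd 0%Z L)) = cnt L m)%nat.
Proof.
  destruct L as [|h L]; simpl.
  - unfold chg. rewrite Z.mul_0_r. auto.
  - unfold chg, upd. destruct (Z.eqb_spec h 0) as [->|hh].
    + rewrite !Z.mul_0_r. simpl. auto.
    + assert (0 < h * h) by nia. destruct (Z.ltb_spec (h*h) 0); [lia|]. lia.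
Qed.

Lemma decomp l m : (1 <= cnt l m)%nat -> exists l1 x l2, l = l1 ++ x :: l2 /\ cnt l1 m = 0%nat /\ lastnz l1 m * x < 0.
Proof.
  revert m; induction l as [|y l IH]; intros m H; simpl in H; [lia|].
  unfold chg in H. destruct (Z.ltb_spec (m * y) 0) as [h|h].
  - exists [], y, l. simpl. auto.
  - destruct (IH (upd m y)) as [l1 [x [l2 [e [c k]]]]]; [lia|].
    exists (y :: l1), x, l2. subst. simpl. unfold chg. destruct (Z.ltb_spec (m*y) 0); [lia|]. auto.
Qed.

Lemma lastnz_zero l m : (forall y, In y l -> y = 0) -> lastnz l m = m.
Proof.
  revert m; induction l as [|y l IH]; intros m H; simpl; auto.
  rewrite (H y) by (left; auto). unfold upd. simpl. apply IH. intros; apply H; right; auto.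
Qed.

Lemma lastnz_nz l : lastnz l 0 <> 0 -> exists y, In y l /\ y <> 0.
Proof.
  intro H. destruct (List.existsb (fun y => negb (y =? 0)) l) eqn:E.
  - apply existsb_exists in E. destruct E as [y [h1 h2]]. exists y; split; auto.
    destruct (Z.eqb_spec y 0); simpl in h2; congruence.
  - exfalso. apply H. apply lastnz_zero. intros y hy.
    destruct (Z.eqb_spec y 0); auto. exfalso.
    assert (existsb (fun y => negb (y =? 0)) l = true).
    { apply existsb_exists. exists y. split; auto. destruct (Z.eqb_spec y 0); auto. }
    congruence.
Qed.

Lemma cnt_zero_nonzero l : (forall y, In y l -> y = 0) -> cnt l 0 = 0%nat.
Proof.
  induction l as [|y l IH]; intro H; simpl; auto.
  rewrite (H y) by (left; auto). unfold chg, upd; simpl. apply IH. intros; apply H; right; auto.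
Qed.

(* sign hyperfield addition: z in x [+] y *)
Definition saddb (x y z : Z) : bool :=
  if x =? 0 then z =? y else if y =? 0 then z =? x else if x =? y then z =? x else true.

Fixpoint SRel (tau : Z) (e t : list Z) : Prop :=
  match e with
  | [] => False
  | x :: e' => match t with
     | [] => e' = [] /\ x = tau
     | y :: t' => saddb (- y) tau x = true /\ SRel y e' t'
     end
  end.

Definition Jb (tau lt le : Z) : bool :=
  andb (if tau =? 0 then le =? lt else andb (tau =? lt) (negb (le =? 0))) (if lt =? 0 then tau =? 0 else true).
Definition Psi (lt le : Z) : nat := if andb (le =? lt) (negb (lt =? 0)) then 1%nat else 0%nat.
Definition nzb (z : Z) : nat := if z =? 0 then 0%nat else 1%nat.

Lemma step_check x y tau lt le : inr x = true -> inr y = true -> inr tau = true -> inr lt = true -> inr le = true ->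
  saddb (-y) tau x = true -> Jb tau lt le = true ->
  Jb y (upd lt y) (upd le x) = true /\ (chg lt y + Psi (upd lt y) (upd le x) <= chg le x + Psi lt le)%nat.
Proof. intros. zcases; vm_compute in *; try discriminate; split; auto; lia. Qed.

Lemma base_check tau lt le : inr tau = true -> inr lt = true -> inr le = true ->
  Jb tau lt le = true -> (nzb lt <= chg le tau + Psi lt le)%nat.
Proof. intros. zcases; vm_compute in *; try discriminate; lia. Qed.

Lemma inr_upd a b : inr a = true -> inr b = true -> inr (upd a b) = true.
Proof. unfold upd. destruct (b =? 0); auto. Qed.

Lemma GA e : forall t tau lt le, SRel tau e t -> Forall (fun z => inr z = true) e -> Forall (fun z => inr z = true) t ->
  inr tau = true -> inr lt = true -> inr le = true -> Jb tau lt le = true ->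
  (cnt t lt + nzb (lastnz t lt) <= cnt e le + Psi lt le)%nat.
Proof.
  induction e as [|x e IH]; intros t tau lt le H fe ft htau hlt hle hJ; simpl in H; [contradiction|].
  pose proof (Forall_inv fe) as hx. pose proof (Forall_inv_tail fe) as fe'.
  destruct t as [|y t].
  - destruct H as [-> ->]. simpl. pose proof (base_check tau lt le htau hlt hle hJ). lia.
  - destruct H as [h1 h2]. pose proof (Forall_inv ft) as hy. pose proof (Forall_inv_tail ft) as ft'.
    destruct (step_check x y tau lt le) as [j1 j2]; auto.
    specialize (IH t y (upd lt y) (upd le x) h2 fe' ft' hy (inr_upd _ _ hlt hy) (inr_upd _ _ hle hx) j1).
    simpl. lia.
Qed.

Lemma GA0 e t : SRel 0 e t -> Forall (fun z => inr z = true) e -> Forall (fun z => inr z = true) t ->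
  (exists y, In y t /\ y <> 0) -> (cnt t 0 + 1 <= cnt e 0)%nat.
Proof.
  intros H fe ft [y [hy hy0]].
  pose proof (GA e t 0 0 0 H fe ft eq_refl eq_refl eq_refl eq_refl) as G.
  assert (nzb (lastnz t 0) = 1%nat).
  { unfold nzb. destruct (Z.eqb_spec (lastnz t 0) 0) as [h|h]; auto.
    exfalso.
    assert (forall l m, inr m = true -> Forall (fun z => inr z = true) l -> (exists y, In y l /\ y <> 0) -> lastnz l m <> 0) as L.
    { induction l as [|a l IHl]; intros m hm fl [w [hw hw0]]; [destruct hw|].
      inversion fl; subst. simpl.
      destruct hw as [->|hw].
      - unfold upd. destruct (Z.eqb_spec w 0); [lia|].
        destruct (existsb (fun z => negb (z =? 0)) l) eqn:E.
        + apply existsb_exists in E. destruct E as [u [hu1 hu2]]. apply IHl; auto.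
          exists u; split; auto. destruct (Z.eqb_spec u 0); simpl in hu2; congruence.
        + rewrite lastnz_zero; auto. intros u hu. destruct (Z.eqb_spec u 0); auto.
          assert (existsb (fun z => negb (z =? 0)) l = true).
          { apply existsb_exists. exists u. split; auto. destruct (Z.eqb_spec u 0); auto. }
          congruence.
      - apply IHl; eauto. apply inr_upd; auto. }
    apply (L t 0); eauto. }
  unfold Psi in G. simpl in G. lia.
Qed.

Lemma SRel_zero e t : SRel 0 e t -> (forall y, In y t -> y = 0) -> forall x, In x e -> x = 0.
Proof.
  revert t; induction e as [|x e IH]; intros t H ht z hz; simpl in H; [contradiction|].
  destruct t as [|y t].
  - destruct H as [-> ->]. destruct hz as [->|[]]; auto.
  - destruct H as [h1 h2]. assert (y = 0) by (apply ht; left; auto). subst y.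
    destruct hz as [<-|hz].
    + unfold saddb in h1. simpl in h1. apply Z.eqb_eq in h1. auto.
    + apply (IH t); auto. intros; apply ht; right; auto.
Qed.

Definition stp (st t : Z) : Z :=
  if st =? 2 then 2 else if t =? 0 then st else if st =? 0 then t else if st =? t then st else 2.

Lemma fold_stp_2 l : fold_left stp l 2 = 2.
Proof. induction l; simpl; auto. Qed.

Lemma fold_cnt l : forall st, inr st = true -> Forall (fun z => inr z = true) l ->
  (cnt l st = 0%nat -> fold_left stp l st = lastnz l st) /\ ((1 <= cnt l st)%nat -> fold_left stp l st = 2).
Proof.
  induction l as [|x l IH]; intros st hs fl; simpl; [split; intros; auto; lia|].
  pose proof (Forall_inv fl) as hx. pose proof (Forall_inv_tail fl) as fl'. cbv beta in hx.
  assert (chg st x = 1%nat /\ stp st x = 2 \/ chg st x = 0%nat /\ stp st x = upd st x) as D.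
  { clear IH fl fl'. zcases; vm_compute; first [left; split; reflexivity | right; split; reflexivity]. }
  destruct D as [[d1 d2]|[d1 d2]]; rewrite d2, d1.
  - rewrite fold_stp_2. split; intros; auto; lia.
  - destruct (IH (upd st x)) as [i1 i2]; auto. apply inr_upd; auto.
Qed.

Lemma stp_check st t z : inr st = true -> inr t = true -> inr z = true ->
  saddb st t z = true -> stp st t <> 2 -> z = stp st t.
Proof. intros. zcases; vm_compute in *; try discriminate; auto; congruence. Qed.

Lemma stp_2 st t : inr st = true -> inr t = true -> stp st t = 2 -> st <> 0 /\ t = - st.
Proof. intros. zcases; vm_compute in *; try discriminate; split; auto; congruence. Qed.

Lemma stp_range st t : inr st = true -> inr t = true -> inr (stp st t) = true \/ stp st t = 2.
Proof. intros. zcases; vm_compute; auto. Qed.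

Lemma ustep a b : inr a = true -> inr b = true ->
  let u := if a =? 0 then b else - a in
  chg b u = chg (- b) a /\ upd b u = u /\ upd (- b) a = - u.
Proof. intros. zcases; vm_compute; auto. Qed.

Lemma lastnz_keep l : forall m, m <> 0 -> lastnz l m <> 0.
Proof. induction l as [|x l IH]; intros m hm; simpl; auto. apply IH. unfold upd. destruct (Z.eqb_spec x 0); auto. Qed.

Lemma lastnz_ne0 l : forall m, (exists y, In y l /\ y <> 0) -> lastnz l m <> 0.
Proof.
  induction l as [|x l IH]; intros m [y [hy hy0]]; [destruct hy|]. simpl.
  destruct hy as [->|hy].
  - apply lastnz_keep. unfold upd. destruct (Z.eqb_spec y 0); auto.
  - apply IH. eauto.
Qed.

Lemma lastnz_range l : forall m, inr m = true -> Forall (fun z => inr z = true) l -> inr (lastnz l m) = true.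
Proof.
  induction l as [|x l IH]; intros m hm fl; simpl; auto.
  apply IH. apply inr_upd; auto. apply (Forall_inv fl). apply (Forall_inv_tail fl).
Qed.

Lemma neg_prod a b : inr a = true -> inr b = true -> a * b < 0 -> b = - a /\ a <> 0.
Proof. intros. zcases; lia. Qed.

Lemma upd_0 x : upd 0 x = x.
Proof. unfold upd. destruct (Z.eqb_spec x 0); auto. Qed.

End MP2.
Import MP2.

Module MP3.
Open Scope R_scope.

Definition isg (C : R) (x : TR) : Z :=
  match x with Inf => 0%Z | Fin b v => if Req_EM_T v C then (if b then 1%Z else (-1)%Z) else 0%Z end.

Lemma isg_range C x : inr (isg C x) = true.
Proof. destruct x as [|b v]; simpl; auto. destruct Req_EM_T; auto. destruct b; auto. Qed.

Lemma isg_topp C x : isg C (topp x) = (- isg C x)%Z.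
Proof. destruct x as [|b v]; simpl; auto. destruct Req_EM_T; auto. destruct b; auto. Qed.

Lemma isg_nz C x : isg C x <> 0%Z -> exists b, x = Fin b C.
Proof. destruct x as [|b v]; simpl; [congruence|]. destruct Req_EM_T; [subst; eauto|congruence]. Qed.

Lemma isg_zero C x : geC C x -> isg C x = 0%Z -> x = Inf \/ exists b v, x = Fin b v /\ C < v.
Proof. destruct x as [|b v]; simpl; auto. intros h. destruct Req_EM_T.
  destruct b; discriminate. intros _. right. exists b, v. split; auto. lra. Qed.

Lemma isg_inj C x y : isg C x = isg C y -> isg C x <> 0%Z -> x = y.
Proof.
  intros e n. destruct (isg_nz C x n) as [b ->]. assert (isg C y <> 0%Z) by congruence.
  destruct (isg_nz C y H) as [b' ->]. simpl in e. destruct Req_EM_T; [|congruence].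
  destruct b, b'; simpl in e; congruence.
Qed.

Lemma isg_sh C c x : isg C (sh c x) = isg (C - c) x.
Proof. destruct x as [|b v]; simpl; auto. do 2 destruct Req_EM_T; auto; lra. Qed.

Lemma geC_sh C c x : geC C (sh c x) <-> geC (C - c) x.
Proof. destruct x as [|b v]; simpl; [tauto|]. lra. Qed.

Lemma isg_Fin_C b C : isg C (Fin b C) <> 0%Z.
Proof. simpl. destruct Req_EM_T; [|congruence]. destruct b; discriminate. Qed.

Ltac sdec := unfold saddb; repeat match goal with |- context [Z.eqb ?x ?y] => destruct (Z.eqb_spec x y) end;
  auto; try (exfalso; lia).
Lemma saddb_a0 a : saddb a 0 a = true.
Proof. sdec. Qed.
Lemma saddb_0a a : saddb 0 a a = true.
Proof. sdec. Qed.
Lemma saddb_aa a : saddb a a a = true.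
Proof. sdec. Qed.
Lemma saddb_opp a z : a <> 0%Z -> saddb a (- a) z = true.
Proof. intro. sdec. Qed.

Lemma isg_hadd C x y z : geC C x -> geC C y -> hadd x y z -> saddb (isg C x) (isg C y) (isg C z) = true.
Proof.
  destruct x as [|s v], y as [|s' w]; intros hx hy H; hsimpl; subst.
  - apply saddb_0a.
  - apply saddb_0a.
  - apply saddb_a0.
  - simpl in hx, hy.
    destruct H as [[h1 h2]|[[h1 h2]|[[h1 [h2 h3]]|[h1 [h2 h3]]]]]; subst.
    + replace (isg C (Fin s' w)) with 0%Z. apply saddb_a0.
      simpl. destruct Req_EM_T; auto; lra.
    + replace (isg C (Fin s v)) with 0%Z. apply saddb_0a.
      simpl. destruct Req_EM_T; auto; lra.
    + apply saddb_aa.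
    + destruct (Req_EM_T w C) as [e|e].
      * subst. replace (isg C (Fin s' C)) with (- isg C (Fin s C))%Z. apply saddb_opp. apply isg_Fin_C.
        apply bool_neq in h2. subst. simpl. destruct Req_EM_T; [|lra]. destruct s; auto.
      * replace (isg C (Fin s w)) with 0%Z. replace (isg C (Fin s' w)) with 0%Z.
        replace (isg C z) with 0%Z. reflexivity.
        destruct h3 as [->|[b [t [h4 ->]]]]; simpl; auto. destruct Req_EM_T; auto; lra.
        simpl; destruct Req_EM_T; auto; lra.
        simpl; destruct Req_EM_T; auto; lra.
Qed.

Lemma isg_hpick C x y : geC C x -> geC C y -> isg C (hpick x y) = if Z.eqb (isg C x) 0 then isg C y else isg C x.
Proof.
  destruct x as [|s v], y as [|s' w]; simpl geC; intros hx hy; simpl hpick.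
  - reflexivity.
  - reflexivity.
  - destruct (Z.eqb_spec (isg C (Fin s v)) 0); auto.
  - destruct (Rlt_dec w v).
    + replace (isg C (Fin s v)) with 0%Z; auto. simpl; destruct Req_EM_T; auto; lra.
    + destruct (Z.eqb_spec (isg C (Fin s v)) 0) as [e|e]; auto.
      rewrite e. simpl in e |- *. destruct (Req_EM_T v C); [destruct s; discriminate|].
      destruct Req_EM_T; auto; lra.
Qed.

Fixpoint NRel (prev : TR) (P Q : list TR) : Prop :=
  match P with
  | [] => False
  | x :: P' => match Q with
     | [] => P' = [] /\ x = prev
     | y :: Q' => hadd (topp y) prev x /\ NRel y P' Q'
     end
  end.

Lemma NRel_nth P : forall prev Q, NRel prev P Q <->
  (length P = S (length Q) /\ forall i, (i < length P)%nat ->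
     hadd (topp (nth i Q Inf)) (nth i (prev :: Q) Inf) (nth i P Inf)).
Proof.
  induction P as [|x P IH]; intros prev Q; simpl; [split; [tauto| intros [h _]; discriminate]|].
  destruct Q as [|y Q].
  - split.
    + intros [-> ->]. split; auto. intros i hi. destruct i; [|simpl in hi; lia]. simpl. hsimpl. auto.
    + intros [h1 h2]. destruct P; [|simpl in h1; discriminate]. split; auto.
      specialize (h2 0%nat ltac:(lia)). simpl in h2. hsimpl. auto.
  - rewrite IH. split.
    + intros [h1 [h2 h3]]. split; [simpl; lia|]. intros [|i] hi; simpl; auto. apply h3. lia.
    + intros [h1 h2]. split; [apply (h2 0%nat); lia|]. split; [simpl in h1; lia|].
      intros i hi. apply (h2 (S i)). lia.
Qed.

Lemma NRel_geC C P : forall prev Q, NRel prev P Q -> geC C prev -> (forall x, In x P -> geC C x) ->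
  forall y, In y Q -> geC C y.
Proof.
  induction P as [|x P IH]; intros prev Q H hp hP y hy; simpl in H; [contradiction|].
  destruct Q as [|q Q]; [destruct hy|].
  destruct H as [h1 h2].
  assert (geC C q).
  { apply geC_topp. apply (hadd_geC_l C _ prev x); auto. apply hP; left; auto. }
  destruct hy as [<-|hy]; auto.
  apply (IH q Q); auto. intros; apply hP; right; auto.
Qed.

Lemma NRel_SRel C P : forall prev Q, NRel prev P Q -> geC C prev -> (forall x, In x P -> geC C x) ->
  (forall y, In y Q -> geC C y) ->
  SRel (isg C prev) (map (isg C) P) (map (isg C) Q).
Proof.
  induction P as [|x P IH]; intros prev Q H hp hP hQ; simpl in H; [contradiction|].
  destruct Q as [|q Q]; simpl.
  - destruct H as [-> ->]. auto.
  - destruct H as [h1 h2]. split.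
    + rewrite <- isg_topp. apply isg_hadd; auto. apply geC_topp; apply hQ; left; auto.
    + apply IH; auto. apply hQ; left; auto. intros; apply hP; right; auto. intros; apply hQ; right; auto.
Qed.

Fixpoint ulist (prev : TR) (l : list TR) : list TR :=
  match l with [] => [] | x :: l' => hpick (topp x) prev :: ulist (hpick (topp x) prev) l' end.
Fixpoint ulast (prev : TR) (l : list TR) : TR :=
  match l with [] => prev | x :: l' => ulast (hpick (topp x) prev) l' end.
Fixpoint dlist (l : list TR) : list TR :=
  match l with [] => [] | x :: l' => hpick x (hd Inf (dlist l')) :: dlist l' end.

Lemma length_ulist l : forall prev, length (ulist prev l) = length l.
Proof. induction l; simpl; auto. Qed.
Lemma length_dlist l : length (dlist l) = length l.
Proof. induction l; simpl; auto. Qed.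

Lemma up_ok P1 : forall prev R S, NRel (ulast prev P1) R S -> NRel prev (P1 ++ R) (ulist prev P1 ++ S).
Proof.
  induction P1 as [|x P1 IH]; intros prev R S H; simpl; auto.
  split; [|apply IH; auto].
  pose proof (hadd_rev _ _ _ (hpick_in (topp x) prev)) as h.
  destruct x; simpl in h |- *; auto. rewrite Bool.negb_involutive in h. auto.
Qed.

Lemma hadd_down a b c : hadd a b c -> hadd (topp b) c a.
Proof.
  intro H. apply hadd_comm in H. apply hadd_rev in H. apply hadd_opp in H.
  apply hadd_comm in H. apply hadd_rev in H.
  destruct a as [|s v], b as [|s' w], c as [|s'' u]; simpl in H |- *; rewrite ?Bool.negb_involutive in H; auto.
Qed.

Lemma down_ok l : l <> [] -> NRel (hd Inf (dlist l)) l (tl (dlist l)).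
Proof.
  induction l as [|x l IH]; intro hl; [congruence|].
  destruct l as [|y l].
  - simpl. rewrite hpick_Ir. auto.
  - assert (dlist (y :: l) <> []) as hd0.
    { intro e. apply (f_equal (@length TR)) in e. rewrite length_dlist in e. simpl in e. discriminate. }
    specialize (IH ltac:(congruence)).
    remember (dlist (y :: l)) as D. destruct D as [|d D]; [congruence|].
    change (dlist (x :: y :: l)) with (hpick x (hd Inf (dlist (y :: l))) :: dlist (y :: l)).
    rewrite <- HeqD. simpl. split.
    + apply hadd_down. apply hpick_in.
    + simpl in IH. auto.
Qed.

Lemma ulist_geC C l : forall prev, geC C prev -> (forall x, In x l -> geC C x) ->
  (forall y, In y (ulist prev l) -> geC C y) /\ geC C (ulast prev l).
Proof.
  induction l as [|x l IH]; intros prev hp hl; simpl; [split; [tauto|auto]|].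
  assert (geC C (hpick (topp x) prev)) as g.
  { apply hpick_geC; auto. apply geC_topp. apply hl; left; auto. }
  destruct (IH _ g) as [i1 i2]. intros; apply hl; right; auto.
  split; auto. intros y [<-|hy]; auto.
Qed.

Lemma dlist_geC C l : (forall x, In x l -> geC C x) -> forall y, In y (dlist l) -> geC C y.
Proof.
  induction l as [|x l IH]; intros hl y hy; simpl in hy; [contradiction|].
  assert (forall y, In y (dlist l) -> geC C y) as i by (apply IH; intros; apply hl; right; auto).
  destruct hy as [<-|hy]; auto. apply hpick_geC. apply hl; left; auto.
  destruct (dlist l); simpl; auto. apply i; left; auto.
Qed.

Lemma ulist_cnt C l : forall prev, geC C prev -> (forall x, In x l -> geC C x) ->
  cnt (map (isg C) (ulist prev l)) (isg C prev) = cnt (map (isg C) l) (- isg C prev)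
  /\ isg C (ulast prev l) = (- lastnz (map (isg C) l) (- isg C prev))%Z
  /\ lastnz (map (isg C) (ulist prev l)) (isg C prev) = (- lastnz (map (isg C) l) (- isg C prev))%Z.
Proof.
  induction l as [|x l IH]; intros prev hp hl; simpl; [split; [|split]; auto; lia|].
  assert (geC C (topp x)) as gx by (apply geC_topp; apply hl; left; auto).
  assert (isg C (hpick (topp x) prev) = if Z.eqb (isg C x) 0 then isg C prev else (- isg C x)%Z) as e.
  { rewrite isg_hpick; auto. rewrite isg_topp. destruct (Z.eqb_spec (isg C x) 0) as [h|h].
    rewrite h. simpl. auto. destruct (Z.eqb_spec (- isg C x) 0); [lia|auto]. }
  destruct (ustep (isg C x) (isg C prev) (isg_range _ _) (isg_range _ _)) as [u1 [u2 u3]].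
  rewrite <- e in u1, u2, u3.
  destruct (IH (hpick (topp x) prev)) as [i1 [i2 i3]]. apply hpick_geC; auto. intros; apply hl; right; auto.
  rewrite u2, u1, u3, i1, i3. split; [|split]; auto.
Qed.

Lemma dlist_cnt C l : (forall x, In x l -> geC C x) -> forall m,
  cnt (map (isg C) (dlist l)) m = cnt (map (isg C) l) m.
Proof.
  induction l as [|x l IH]; intros hl m; simpl; auto.
  assert (forall x, In x l -> geC C x) as hl' by (intros; apply hl; right; auto).
  assert (geC C (hd Inf (dlist l))) as gh.
  { destruct (dlist l) eqn:E; simpl; auto. apply (dlist_geC C l hl'). rewrite E; left; auto. }
  rewrite isg_hpick; auto; [|apply hl; left; auto].
  assert (isg C (hd Inf (dlist l)) = hd 0%Z (map (isg C) (dlist l))) as eh.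
  { destruct (dlist l); simpl; auto. }
  destruct (Z.eqb_spec (isg C x) 0) as [h|h].
  - rewrite h, eh. rewrite hd_lemma. rewrite IH by auto. unfold chg, upd. rewrite Z.mul_0_r. simpl. auto.
  - rewrite IH by auto. auto.
Qed.

End MP3.
Import MP3.

Module MP4.
Open Scope R_scope.

Definition Fh (S : TR -> Prop) (y : TR) : TR -> Prop := fun z => exists b, S b /\ hadd b y z.
Definition Inv C st (S : TR -> Prop) :=
  (exists z, S z) /\ (st <> 2%Z -> forall z, S z -> geC C z /\ isg C z = st) /\
  (st = 2%Z -> forall z, geC C z -> S z).

Lemma isg_neq_2 C x : isg C x <> 2%Z.
Proof. intro h. pose proof (isg_range C x) as r. rewrite h in r. discriminate. Qed.

Lemma inv_step C st S y : geC C y -> (inr st = true \/ st = 2%Z) -> Inv C st S ->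
  Inv C (stp st (isg C y)) (Fh S y).
Proof.
  intros gy hst [[z0 hz0] [i2 i3]].
  split; [exists (hpick z0 y), z0; split; auto; apply hpick_in|].
  split.
  - intros hn. assert (st <> 2%Z) as h2 by (intro e; subst; apply hn; reflexivity).
    destruct hst as [hst|]; [|contradiction].
    intros z [b [hb hz]]. destruct (i2 h2 b hb) as [gb ib].
    split; [apply (hadd_geC C b y z); auto|].
    apply stp_check; auto using isg_range. rewrite <- ib. apply isg_hadd; auto.
  - intros h2 z gz. destruct (Z.eq_dec st 2) as [e|e].
    + subst st. destruct z as [|bz t].
      * exists (topp y). split; [apply i3; auto; apply geC_topp; auto| apply hadd_cancel].
      * destruct y as [|s w].
        -- exists (Fin bz t). split; [apply i3; auto|]. hsimpl. auto.
        -- destruct (Rlt_dec t w).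
           ++ exists (Fin bz t). split; [apply i3; auto|]. hsimpl. left; auto.
           ++ exists (Fin (negb s) w). split; [apply i3; auto|].
              hsimpl. right; right; right. repeat split; auto. destruct s; simpl; congruence.
              right. exists bz, t. split; auto. lra.
    + destruct hst as [hst|]; [|contradiction].
      destruct (stp_2 st (isg C y) hst (isg_range _ _) h2) as [n0 ey].
      destruct (i2 e z0 hz0) as [g0 i0].
      destruct (isg_nz C z0) as [b0 ->]; [congruence|].
      destruct (isg_nz C y) as [b1 ->]; [lia|].
      exists (Fin b0 C). split; auto.
      assert (b0 <> b1).
      { intro; subst b1. rewrite <- i0 in ey. pose proof (isg_Fin_C b0 C). lia. }
      hsimpl. right; right; right. repeat split; auto.
      destruct z as [|bz t]; [left; auto|right; exists bz, t; split; auto; simpl in gz; auto].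
Qed.

Lemma inv_fold C l : forall st S, (forall y, In y l -> geC C y) -> (inr st = true \/ st = 2%Z) -> Inv C st S ->
  Inv C (fold_left stp (map (isg C) l) st) (fold_left Fh l S).
Proof.
  induction l as [|y l IH]; intros st S hl hst hi; simpl; auto.
  apply IH. intros; apply hl; right; auto.
  destruct hst as [hst| ->]; [apply stp_range; auto; apply isg_range| right; reflexivity].
  apply inv_step; auto. apply hl; left; auto.
Qed.

Lemma Forall_isg C l : Forall (fun z => inr z = true) (map (isg C) l).
Proof. apply Forall_forall. intros z hz. apply in_map_iff in hz. destruct hz as [x [<- _]]. apply isg_range. Qed.

Lemma root_iff C P : P <> [] -> (forall x, In x P -> geC C x) -> (exists x, In x P /\ isg C x <> 0%Z) ->
  (hsum P Inf <-> (1 <= cnt (map (isg C) P) 0)%nat).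
Proof.
  intros hne hge hat. destruct P as [|a l]; [congruence|].
  change (hsum (a :: l)) with (fold_left Fh l (fun z => z = a)).
  assert (Inv C (isg C a) (fun z => z = a)) as I0.
  { split; [exists a; auto|]. split; [intros _ z ->; split; auto; apply hge; left; auto|].
    intro h; exfalso; apply (isg_neq_2 C a); auto. }
  pose proof (inv_fold C l (isg C a) _ (fun y hy => hge y (or_intror hy)) (or_introl (isg_range _ _)) I0) as [_ [J2 J3]].
  change (map (isg C) (a :: l)) with (isg C a :: map (isg C) l). simpl cnt. rewrite upd_0.
  destruct (fold_cnt (map (isg C) l) (isg C a) (isg_range _ _) (Forall_isg C l)) as [f1 f2].
  split.
  - intro H. destruct (Nat.eq_dec (cnt (map (isg C) l) (isg C a)) 0) as [h|h]; [|simpl; lia].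
    exfalso. rewrite (f1 h) in J2.
    assert (lastnz (map (isg C) l) (isg C a) <> 0%Z) as nz.
    { pose proof (lastnz_ne0 (map (isg C) (a :: l)) 0) as L. simpl in L. rewrite upd_0 in L.
      apply L. destruct hat as [x [hx hx0]]. exists (isg C x). split; auto.
      destruct hx as [<-|hx]; [left; auto| right; apply in_map; auto]. }
    assert (lastnz (map (isg C) l) (isg C a) <> 2%Z) as n2.
    { intro e. pose proof (lastnz_range (map (isg C) l) (isg C a) (isg_range _ _) (Forall_isg C l)) as rr.
      rewrite e in rr. discriminate. }
    destruct (J2 n2 Inf H) as [_ e]. simpl in e. congruence.
  - intro H. simpl in H. apply J3. apply f2. lia. simpl; auto.
Qed.

Definition nlk (r : R) (k : nat) (p : list TR) : list TR :=
  map (fun i => sh (INR (i + k) * r) (coef p i)) (seq 0 (length p)).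

Lemma nth_map_seq (f : nat -> TR) n i : (i < n)%nat -> nth i (map f (seq 0 n)) Inf = f i.
Proof.
  intro h. rewrite nth_indep with (d' := f 0%nat) by (rewrite length_map, length_seq; auto).
  rewrite map_nth, seq_nth by auto. auto.
Qed.

Lemma length_nlk r k p : length (nlk r k p) = length p.
Proof. unfold nlk. rewrite length_map, length_seq. auto. Qed.

Lemma nth_nlk r k p i : (i < length p)%nat -> nth i (nlk r k p) Inf = sh (INR (i + k) * r) (coef p i).
Proof. intro h. unfold nlk. rewrite nth_map_seq; auto. Qed.

Lemma nth_nlk_ge r k p i : (length p <= i)%nat -> nth i (nlk r k p) Inf = Inf.
Proof. intro h. apply nth_overflow. rewrite length_nlk. auto. Qed.

Lemma In_nlk r k p x : In x (nlk r k p) <-> exists i, (i < length p)%nat /\ x = sh (INR (i + k) * r) (coef p i).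
Proof.
  unfold nlk. rewrite in_map_iff. split.
  - intros [i [<- hi]]. apply in_seq in hi. exists i; split; auto; lia.
  - intros [i [hi ->]]. exists i; split; auto. apply in_seq; lia.
Qed.

Lemma tpow_fin r i : tpow (Fin true r) i = Fin true (INR i * r).
Proof.
  induction i as [|i IH]; simpl tpow.
  - unfold tone. f_equal. simpl. ring.
  - rewrite IH. simpl tmul. f_equal. rewrite S_INR. ring.
Qed.

Lemma peval_nlk p r : peval p (Fin true r) = hsum (nlk r 0 p).
Proof.
  unfold peval, nlk. f_equal. apply map_ext. intro i. rewrite tpow_fin, tmul_true.
  apply sh_ext. rewrite Nat.add_0_r. auto.
Qed.

Lemma IF r k p C : (forall x, In x (nlk r k p) -> geC C x) -> (exists x, In x (nlk r k p) /\ isg C x <> 0%Z) ->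
  initial_form p r = map (isg C) (nlk r k p).
Proof.
  intros hge [x0 [hx0 hx00]].
  apply In_nlk in hx0. destruct hx0 as [j0 [hj0 ->]].
  rewrite isg_sh in hx00. destruct (isg_nz _ _ hx00) as [b0 e0].
  assert (forall j, (j < length p)%nat -> geC (C - INR (j + k) * r) (coef p j)) as G.
  { intros j hj. apply (geC_sh C). apply hge. apply In_nlk. exists j; auto. }
  unfold initial_form, nlk. rewrite map_map. apply map_ext_in. intros i hi. apply in_seq in hi.
  assert (i < length p)%nat as hi' by lia.
  unfold initial_coef. destruct (coef p i) as [|s v] eqn:E; [reflexivity|].
  pose proof (G i hi') as gi. rewrite E in gi. simpl in gi.
  simpl sh. simpl isg. rewrite !plus_INR in *.
  destruct excluded_middle_informative as [hc|hc]; destruct Req_EM_T as [he|he].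
  - destruct s; reflexivity.
  - exfalso. apply he. specialize (hc j0 b0 _ hj0 e0). lra.
  - exfalso. apply hc. intros j s' w hj hcj. pose proof (G j hj) as gj. rewrite hcj in gj. simpl in gj.
    rewrite plus_INR in gj. lra.
  - reflexivity.
Qed.

Lemma min_ex (L : list TR) : (exists x, In x L /\ x <> Inf) ->
  exists C, (forall x, In x L -> geC C x) /\ (exists x, In x L /\ isg C x <> 0%Z).
Proof.
  induction L as [|a L IH]; intros [x [hx hx0]]; [destruct hx|].
  destruct (classic (exists x, In x L /\ x <> Inf)) as [h|h].
  - destruct (IH h) as [C [h1 [y [hy hy0]]]].
    destruct a as [|b v].
    + exists C. split; [intros z [<-|hz]; simpl; auto|]. exists y; split; auto; right; auto.
    + destruct (Rlt_dec v C).
      * exists v. split.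
        -- intros z [<-|hz]; simpl; [lra|]. pose proof (h1 z hz). destruct z; simpl in *; auto; lra.
        -- exists (Fin b v). split; [left; auto| apply isg_Fin_C].
      * exists C. split.
        -- intros z [<-|hz]; simpl; [lra|]. auto.
        -- exists y; split; auto; right; auto.
  - destruct hx as [e|hx]; [subst a|exfalso; apply h; eauto].
    destruct x as [|b v]; [congruence|].
    exists v. split.
    + intros z [<-|hz]; simpl; [lra|]. destruct z; simpl; auto. exfalso; apply h. exists (Fin b0 r); split; auto; discriminate.
    + exists (Fin b v). split; [left; auto| apply isg_Fin_C].
Qed.

Definition qof (r : R) (Q : list TR) : list TR :=
  map (fun i => sh (- (INR (i + 1) * r)) (nth i Q Inf)) (seq 0 (length Q)).

Lemma length_qof r Q : length (qof r Q) = length Q.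
Proof. unfold qof. rewrite length_map, length_seq. auto. Qed.

Lemma nlk_qof r Q : nlk r 1 (qof r Q) = Q.
Proof.
  apply nth_ext with (d := Inf) (d' := Inf). rewrite length_nlk, length_qof; auto.
  intros i hi. rewrite length_nlk, length_qof in hi. rewrite nth_nlk by (rewrite length_qof; auto).
  unfold coef, qof. rewrite nth_map_seq by auto. rewrite sh_sh. rewrite <- (sh_0 (nth i Q Inf)) at 2.
  apply sh_ext. ring.
Qed.

End MP4.
Import MP4.

Module MP5.
Open Scope R_scope.

Lemma tmul_a r x : tmul (Fin true r) x = sh r x.
Proof. destruct x as [|s v]; simpl; auto. f_equal. destruct s; auto. ring. Qed.

Ltac shq := try apply sh_ext; rewrite ?plus_INR, ?S_INR; simpl; ring.

Lemma pdiv_NRel r p q : pdiv_rel (Fin true r) p q -> NRel Inf (nlk r 0 p) (nlk r 1 q).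
Proof.
  intros [hl [hn [h0 [hm hN]]]]. rewrite tmul_a in h0.
  apply NRel_nth. split; [rewrite !length_nlk; auto|].
  intros i hi. rewrite length_nlk in hi.
  destruct i as [|j].
  - change (nth 0 (Inf :: nlk r 1 q) Inf) with Inf.
    rewrite !nth_nlk by lia. apply (proj2 (hadd_Ir _ _)).
    rewrite h0, <- sh_topp, sh_sh, <- sh_topp. shq.
  - change (nth (S j) (Inf :: nlk r 1 q) Inf) with (nth j (nlk r 1 q) Inf).
    destruct (Nat.lt_ge_cases (S j) (length q)) as [hj|hj].
    + rewrite !nth_nlk by lia.
      specialize (hm (S j) ltac:(lia)). replace (S j - 1)%nat with j in hm by lia. rewrite tmul_a in hm.
      apply (hadd_sh (INR (S j) * r)) in hm. rewrite sh_topp, !sh_sh in hm.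
      assert (E1 : sh (INR (S j + 1) * r) (coef q (S j)) = sh (r + INR (S j) * r) (coef q (S j))) by shq.
      assert (E2 : sh (INR (j + 1) * r) (coef q j) = sh (INR (S j) * r) (coef q j)) by shq.
      assert (E3 : sh (INR (S j + 0) * r) (coef p (S j)) = sh (INR (S j) * r) (coef p (S j))) by shq.
      rewrite E1, E2, E3. exact hm.
    + assert (S j = length q) as ej by lia.
      rewrite (nth_nlk_ge r 1 q (S j)) by lia. rewrite topp_I. apply (proj2 (hadd_Il _ _)).
      rewrite !nth_nlk by lia.
      rewrite <- ej in hN. replace (S j - 1)%nat with j in hN by lia. rewrite hN. shq.
Qed.

Lemma NRel_pdiv r p q : length p = S (length q) -> (1 <= length q)%nat ->
  NRel Inf (nlk r 0 p) (nlk r 1 q) -> pdiv_rel (Fin true r) p q.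
Proof.
  intros hl hn H. apply NRel_nth in H. destruct H as [_ H]. rewrite length_nlk in H.
  unfold pdiv_rel. split; [auto|]. split; [auto|]. split; [|split].
  - specialize (H 0%nat ltac:(lia)).
    change (nth 0 (Inf :: nlk r 1 q) Inf) with Inf in H.
    rewrite !nth_nlk in H by lia. apply (proj1 (hadd_Ir _ _)) in H.
    rewrite tmul_a. apply (sh_inj (INR (0 + 0) * r)). rewrite H, sh_topp, sh_sh. f_equal. shq.
  - intros i [hi1 hi2]. destruct i as [|j]; [lia|].
    specialize (H (S j) ltac:(lia)).
    change (nth (S j) (Inf :: nlk r 1 q) Inf) with (nth j (nlk r 1 q) Inf) in H.
    rewrite !nth_nlk in H by lia. replace (S j - 1)%nat with j by lia.
    apply (hadd_sh_iff (INR (S j) * r)). rewrite tmul_a, sh_topp, !sh_sh.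
    assert (E1 : sh (INR (S j + 1) * r) (coef q (S j)) = sh (r + INR (S j) * r) (coef q (S j))) by shq.
    assert (E2 : sh (INR (j + 1) * r) (coef q j) = sh (INR (S j) * r) (coef q j)) by shq.
    assert (E3 : sh (INR (S j + 0) * r) (coef p (S j)) = sh (INR (S j) * r) (coef p (S j))) by shq.
    rewrite <- E1, <- E2, <- E3. exact H.
  - destruct (length q) as [|j] eqn:eq; [lia|].
    specialize (H (S j) ltac:(lia)).
    change (nth (S j) (Inf :: nlk r 1 q) Inf) with (nth j (nlk r 1 q) Inf) in H.
    rewrite (nth_nlk_ge r 1 q (S j)) in H by lia. rewrite topp_I in H.
    apply (proj1 (hadd_Il _ _)) in H. rewrite !nth_nlk in H by lia.
    replace (S j - 1)%nat with j by lia.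
    apply (sh_inj (INR (S j) * r)).
    assert (E2 : sh (INR (j + 1) * r) (coef q j) = sh (INR (S j) * r) (coef q j)) by shq.
    assert (E3 : sh (INR (S j + 0) * r) (coef p (S j)) = sh (INR (S j) * r) (coef p (S j))) by shq.
    rewrite <- E2, <- E3. exact H.
Qed.

Lemma natmax_eq (M : nat -> Prop) m : M m -> (forall m', M m' -> (m' <= m)%nat) -> natmax M = m.
Proof.
  intros h1 h2. unfold natmax.
  destruct (epsilon_spec (inhabits 0%nat) (fun m => M m /\ forall m', M m' -> (m' <= m)%nat)
     (ex_intro _ m (conj h1 h2))) as [e1 e2].
  apply Nat.le_antisymm; auto.
Qed.

End MP5.
Import MP5.

Module MP6.
Open Scope R_scope.

Lemma chg_upd_opp s : s <> 0%Z -> chg s (- s) = 1%nat /\ upd s (- s) = (- s)%Z.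
Proof.
  intro h. unfold chg, upd. destruct (Z.eqb_spec (- s) 0); [lia|].
  destruct (Z.ltb_spec (s * - s) 0); [|nia]. auto.
Qed.

Lemma main r : forall n p, length p = n -> (0 < n)%nat -> (exists i, (i < n)%nat /\ coef p i <> Inf) ->
  mult_fuel n (Fin true r) p = sign_changes (initial_form p r).
Proof.
  induction n as [|k IH]; intros p hl hn hex; [lia|].
  set (P := nlk r 0 p).
  assert (exists x, In x P /\ x <> Inf) as hP.
  { destruct hex as [i [hi hci]]. exists (sh (INR (i + 0) * r) (coef p i)). split.
    apply In_nlk. exists i; split; auto; lia. destruct (coef p i); simpl; congruence. }
  destruct (min_ex P hP) as [C [hge hat]].
  rewrite (IF r 0 p C hge hat), sc_cnt. fold P.
  set (e := map (isg C) P).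
  assert (P <> []) as hPne.
  { intro h. apply (f_equal (@length TR)) in h. unfold P in h. rewrite length_nlk in h. simpl in h. lia. }
  assert (is_root (Fin true r) p <-> (1 <= cnt e 0)%nat) as hroot.
  { unfold is_root. rewrite peval_nlk. apply root_iff; auto. }
  simpl mult_fuel.
  destruct excluded_middle_informative as [hr|hr].
  2: { assert (cnt e 0 = 0%nat). { destruct (cnt e 0) eqn:E; auto. exfalso; apply hr, hroot; lia. } lia. }
  apply hroot in hr.
  assert (UB : forall q, pdiv_rel (Fin true r) p q -> (mult_fuel k (Fin true r) q + 1 <= cnt e 0)%nat).
  { intros q hq. pose proof hq as [hlq [hnq _]].
    assert (length q = k) as hk by lia.
    pose proof (pdiv_NRel r p q hq) as HN. fold P in HN.
    set (Q := nlk r 1 q) in *.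
    assert (forall y, In y Q -> geC C y) as gQ by (apply (NRel_geC C P Inf Q HN); simpl; auto).
    pose proof (NRel_SRel C P Inf Q HN I hge gQ) as HS. simpl isg in HS.
    set (t := map (isg C) Q) in *.
    assert (exists y, In y t /\ y <> 0%Z) as ht.
    { destruct (classic (exists y, In y t /\ y <> 0%Z)) as [h|h]; auto. exfalso.
      destruct hat as [x [hx hx0]].
      apply hx0. apply (SRel_zero e t HS).
      intros y hy. destruct (Z.eq_dec y 0); auto. exfalso; apply h; eauto.
      apply in_map; auto. }
    assert (exists x, In x Q /\ isg C x <> 0%Z) as hatQ.
    { destruct ht as [y [hy hy0]]. unfold t in hy. apply in_map_iff in hy. destruct hy as [x [<- hx]]. eauto. }
    rewrite (IH q hk ltac:(lia)).
    - rewrite (IF r 1 q C gQ hatQ), sc_cnt. fold Q. fold t.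
      pose proof (GA0 e t HS (Forall_isg C P) (Forall_isg C Q) ht). lia.
    - destruct hatQ as [x [hx hx0]]. apply In_nlk in hx. destruct hx as [i [hi ->]].
      exists i. split; [lia|]. intro hc. rewrite hc in hx0. simpl in hx0. congruence. }
  destruct (decomp e 0 hr) as [l1 [x [l2 [he [hc1 hs]]]]].
  unfold e in he. apply map_eq_app in he. destruct he as [P1 [P2' [eP [m1 m2]]]].
  apply map_eq_cons in m2. destruct m2 as [X [P2 [eP2 [mX m2]]]]. subst P2'.
  set (s := lastnz l1 0) in *.
  destruct (neg_prod s x) as [ex ns].
    { apply lastnz_range; auto. rewrite <- m1. apply Forall_isg. }
    { rewrite <- mX. apply isg_range. }
    auto.
  assert (forall y, In y P1 -> geC C y) as g1 by (intros; apply hge; rewrite eP; apply in_or_app; auto).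
  assert (forall y, In y P2 -> geC C y) as g2
    by (intros; apply hge; rewrite eP; apply in_or_app; right; right; auto).
  destruct (ulist_cnt C P1 Inf I g1) as [uc1 [uc2 uc3]]. simpl isg in uc1, uc2, uc3.
  rewrite Z.opp_0 in uc1, uc2, uc3. rewrite m1 in uc1, uc2, uc3. fold s in uc1, uc2, uc3.
  set (Qc := ulist Inf P1 ++ dlist P2).
  destruct (ulist_geC C P1 Inf I g1) as [gu1 gu2].
  assert (forall y, In y Qc -> geC C y) as gQc.
  { intros y hy. apply in_app_or in hy. destruct hy; [apply gu1; auto| apply (dlist_geC C P2 g2); auto]. }
  assert (isg C X <> 0%Z) as nX by (rewrite mX, ex; lia).
  assert (NRel Inf P Qc) as HN.
  { rewrite eP. unfold Qc. apply up_ok.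
    assert (ulast Inf P1 = X) as eU.
    { apply (isg_inj C). rewrite uc2, mX, ex. auto. rewrite uc2. lia. }
    rewrite eU. destruct P2 as [|y P2].
    - simpl. auto.
    - pose proof (down_ok (y :: P2) ltac:(congruence)) as D.
      change (dlist (y :: P2)) with (hpick y (hd Inf (dlist P2)) :: dlist P2) in D |- *.
      simpl in D |- *. split; auto.
      destruct (isg_nz C X nX) as [bX eX]. rewrite eX. apply hadd_mid.
      apply hpick_geC. apply g2; left; auto.
      destruct (dlist P2) eqn:E; simpl; auto. apply (dlist_geC C P2); [intros; apply g2; right; auto|].
      rewrite E; left; auto. }
  assert (cnt (map (isg C) Qc) 0 + 1 = cnt e 0)%nat as cQ.
  { unfold Qc, e. rewrite !map_app, !cnt_app, uc1, uc3, hc1. rewrite dlist_cnt by auto.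
    rewrite eP, map_app, cnt_app. rewrite m1, hc1. fold s. simpl map. rewrite mX, m2.
    simpl cnt. rewrite ex. destruct (chg_upd_opp s ns) as [c1 c2]. rewrite c1, c2. lia. }
  assert (exists y, In y Qc /\ isg C y <> 0%Z) as hatQ.
  { assert (lastnz (map (isg C) (ulist Inf P1)) 0 <> 0%Z) as h by (rewrite uc3; lia).
    destruct (lastnz_nz _ h) as [z [hz hz0]]. apply in_map_iff in hz. destruct hz as [y [<- hy]].
    exists y. split; auto. unfold Qc. apply in_or_app; auto. }
  set (q0 := qof r Qc).
  assert (length Qc = k) as lQ.
  { unfold Qc. rewrite length_app, length_ulist, length_dlist.
    assert (length P = S k) as lP by (unfold P; rewrite length_nlk; auto).
    rewrite eP, length_app in lP. simpl in lP. lia. }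
  assert (P1 <> []) as hP1.
  { intro h. subst P1. simpl in m1. subst l1. unfold s in ns. simpl in ns. lia. }
  assert (1 <= k)%nat as hk1.
  { rewrite <- lQ. unfold Qc. rewrite length_app, length_ulist. destruct P1; [congruence|]. simpl; lia. }
  assert (pdiv_rel (Fin true r) p q0) as hq0.
  { apply NRel_pdiv. unfold q0; rewrite length_qof; lia. unfold q0; rewrite length_qof; lia.
    unfold q0. rewrite nlk_qof. exact HN. }
  assert (mult_fuel k (Fin true r) q0 = cnt (map (isg C) Qc) 0) as mq0.
  { rewrite (IH q0). rewrite (IF r 1 q0 C); unfold q0; rewrite ?nlk_qof; auto. apply sc_cnt.
    unfold q0; rewrite length_qof; auto. lia.
    destruct hatQ as [y [hy hy0]]. rewrite <- (nlk_qof r Qc) in hy. apply In_nlk in hy.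
    destruct hy as [i [hi ->]]. rewrite length_qof in hi. exists i. split; [lia|].
    intro hc. unfold q0 in hc. rewrite hc in hy0. simpl in hy0. congruence. }
  rewrite (natmax_eq _ (cnt e 0 - 1)).
  - lia.
  - exists q0. split; auto. lia.
  - intros m' [q [hq ->]]. pose proof (UB q hq). lia.
Qed.

End MP6.
Import MP6.

Open Scope R_scope.

Theorem theoremA (p : list TR) (r : R) :
  (0 < length p)%nat ->
  (exists i, (i < length p)%nat /\ coef p i <> Inf) ->
  is_root (Fin true r) p ->
  mult (Fin true r) p = sign_changes (initial_form p r).
Proof.
  intros h1 h2 _. unfold mult. apply main; auto.
Qed.
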